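(* Fix a signal profile $\mathbf s$ and valuations $v_1,\dots,v_n$, and rename the bidders so that $v_1(\mathbf s)\ge v_2(\mathbf s)\ge\cdots\ge v_n(\mathbf s)$. Let $k=\max\{i: v_i(\mathbf s)>v_1(\mathbf s)/2\}$. Then for every $i\in[n]$, $$\mathbb E_{r,\pi}[c_i]\le\frac{1}{i(i+1)}+\frac{\log_2^\dagger\!\big(2v_i(\mathbf s)/\underline v_1^{(i)}(\mathbf s)\big)}{k+1}+\sum_{j\in[k]\setminus\{i\}}\frac{\log_2^\dagger\!\big(v_i(\mathbf s)/\underline v_j^{(i)}(\mathbf s)\big)}{j(j+1)}.$$
   Context: Single-item auction with $n$ bidders, signals $s_i\in S_i\subseteq\mathbb R$, valuations $v_i:\mathbf S\to\mathbb R_{>0}$, $\mathbf S=S_1\times\cdots\times S_n$. Lower estimates: $\underline v_j^{(i)}(\mathbf s)=\inf_{o_i\in S_i}v_j(o_i,\mathbf s_{-i})$ (for $j=i$ this is the infimum of bidder $i$'s own value over its own signal). $\log_2^\dagger(\alpha)=\max(0,\min(1,\log_2\alpha))$, with $a/0=\infty$ and $\log_2\infty=\infty$. For $r\in[0,1)$, $w>0$: $f_r(w)=2^{r+k'}$ for the integer $k'$ with $2^{r+k'}\le w<2^{r+k'+1}$; $f_r(0)=0$. For a permutation $\pi$ of $[n]$, $a$ associated with bidder $i$ and $b$ with bidder $j$: $a>_\pi b$ iff $a>b$, or $a=b$ and $\pi(i)>\pi(j)$. $c_i(r,\pi)=1$ iff $f_r(v_i(\mathbf s))>_\pi f_r(\underline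 v_j^{(i)}(\mathbf s))$ for all $j\ne i$, else $0$; $r\sim U[0,1)$ and $\pi$ uniformly random, independent. *)

(* Defs.v *)
From HB Require Import structures.
From mathcomp Require Import all_boot all_order all_algebra all_fingroup.
From mathcomp Require Import all_classical all_reals all_analysis.
Set Implicit Arguments. Unset Strict Implicit. Unset Printing Implicit Defensive.
Import Order.TTheory GRing.Theory Num.Theory.
Local Open Scope classical_set_scope.
Local Open Scope ring_scope.

Section Auction.
Context {R : realType} {n : nat}.

Definition upd (s : 'I_n -> R) (i : 'I_n) (o : R) : 'I_n -> R :=
  fun k => if k == i then o else s k.

Definition lowv (S : 'I_n -> set R) (v : 'I_n -> ('I_n -> R) -> R)
  (s : 'I_n -> R) (i j : 'I_n) : R :=
  inf [set v j (upd s i o) | o in S i].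

Definition log2 (x : R) : R := ln x / ln 2.

(* log2^dagger(a / b), with a / 0 = oo and log2 oo = oo (so the value is 1) *)
Definition log2dag_div (a b : R) : R :=
  if b == 0 then 1 else Num.max 0 (Num.min 1 (log2 (a / b))).

(* f_r(w) = 2^(r+k') where 2^(r+k') <= w < 2^(r+k'+1); f_r(0) = 0.
   The integer k' is floor(log2 w - r). *)
Definition fr (r w : R) : R :=
  if 0 < w then 2 `^ (r + (Num.floor (log2 w - r))%:~R) else 0.

Definition gt_pi (p : {perm 'I_n}) (a : R) (i : 'I_n) (b : R) (j : 'I_n) : bool :=
  (b < a) || ((a == b) && (p j < p i)%N).

Definition c_alloc (S : 'I_n -> set R) (v : 'I_n -> ('I_n -> R) -> R)
  (s : 'I_n -> R) (i : 'I_n) (r : R) (p : {perm 'I_n}) : R :=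
  if [forall j : 'I_n, (j != i) ==> gt_pi p (fr r (v i s)) i (fr r (lowv S v s i j)) j]
  then 1 else 0.

Definition Ec (S : 'I_n -> set R) (v : 'I_n -> ('I_n -> R) -> R)
  (s : 'I_n -> R) (i : 'I_n) : \bar R :=
  (\int[lebesgue_measure]_(r in `[0%R, 1%R[)
     ((\sum_(p : {perm 'I_n}) c_alloc S v s i r p) / #|{perm 'I_n}|%:R)%:E)%E.

Definition kidx (v : 'I_n -> ('I_n -> R) -> R) (s : 'I_n -> R) (i1 : 'I_n) : nat :=
  \max_(i : 'I_n | v i1 s / 2 < v i s) i.+1.

End Auction.

(* Main.v *)
Require Import Defs.
From HB Require Import structures.
From mathcomp Require Import all_boot all_order all_algebra all_fingroup.
From mathcomp Require Import all_classical all_reals all_analysis.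
From mathcomp Require Import lra ring.
Import Order.TTheory GRing.Theory Num.Theory.
Local Open Scope classical_set_scope.
Local Open Scope ring_scope.

Lemma int_mono (R : realType) (D : set R) (f1 f2 : R -> \bar R) :
  (forall x, D x -> (0 <= f1 x)%E) -> (forall x, D x -> (f1 x <= f2 x)%E) ->
  (\int[lebesgue_measure]_(x in D) f1 x <= \int[lebesgue_measure]_(x in D) f2 x)%E.
Proof.
move=> f10 f12.
have f20 : forall x, D x -> (0 <= f2 x)%E by move=> x Dx; exact: le_trans (f10 _ Dx) (f12 _ Dx).
rewrite ge0_integralE // [X in (_ <= X)%E]ge0_integralE //=.
apply: ereal_sup_le => _ [h /= hf <-]; exists h => //= x.
apply: le_trans (hf x) _; rewrite /patch; case: ifP => // /set_mem Dx; exact: f12.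
Qed.


Lemma leb_itv_le (R : realType) (a b : R) (b0 b1 : bool) : a <= b ->
  (lebesgue_measure [set` Interval (BSide b0 a) (BSide b1 b)] <= (b - a)%:E)%E.
Proof.
move=> ab; rewrite lebesgue_measure_itv /=.
case: ifPn => _ //.
by rewrite lee_fin subr_ge0.
Qed.

Arguments leb_itv_le {R} a b b0 b1.

Lemma ln2_gt0 (R : realType) : 0 < ln (2 : R).
Proof. by apply: ln_gt0; rewrite ltr1n. Qed.

Lemma fr_gt0 (R : realType) (r w : R) : 0 < w -> 0 < fr r w.
Proof. by move=> w0; rewrite /fr w0 powR_gt0. Qed.

Lemma log2_2M (R : realType) (w : R) : 0 < w -> log2 (2 * w) = 1 + log2 w.
Proof.
move=> w0; rewrite /log2 lnM ?posrE // mulrDl divff //.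
by rewrite gt_eqF // ln2_gt0.
Qed.

Lemma fr2 (R : realType) (r w : R) : 0 < w -> fr r (2 * w) = 2 * fr r w.
Proof.
move=> w0; rewrite /fr w0 mulr_gt0 // log2_2M // -addrA floorDzr ?intr_int //.
rewrite floor1 intrD addrCA; set e := (r + _).
rewrite powRD; last by apply/implyP => _; rewrite pnatr_eq0.
have -> : (1%:~R : R) = 1 by []. by rewrite powRr1.
Qed.

Lemma fr_lt (R : realType) (r a b : R) : 0 < a -> 0 < b -> fr r b < fr r a ->
  (Num.floor (log2 b - r) < Num.floor (log2 a - r))%R.
Proof.
move=> a0 b0; rewrite /fr a0 b0; apply: contraTT; rewrite -!leNgt => H.
by apply: ler_powR; [rewrite ler1n | rewrite lerD2l ler_int].
Qed.

Lemma fr_meas (R : realType) (a b : R) : 0 < a -> 0 <= b -> exists I : set R,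
  [/\ measurable I, (forall r, 0 <= r < 1 -> fr r b < fr r a -> I r) &
      (lebesgue_measure I <= (log2dag_div a b)%:E)%E].
Proof.
move=> a0; rewrite le_eqVlt => /orP[/eqP b0|b0].
  exists `[0, 1[%classic; split => //; try by move=> r /= hr _; rewrite in_itv /=.
  rewrite /log2dag_div -b0 eqxx.
  by apply: le_trans (leb_itv_le _ _ _ _ _) _; rewrite ?ler01 // subr0.
have bn0 : b != 0 by rewrite gt_eqF.
set x := log2 a; set y := log2 b.
have hd : log2 (a / b) = x - y.
  by rewrite /log2 lnM ?posrE ?invr_gt0 // lnV ?posrE // mulrBl.
rewrite /log2dag_div (negPf bn0) hd.
have key : forall r, fr r b < fr r a -> Num.floor (y - r) < Num.floor (x - r).
  by move=> r; apply: fr_lt.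
case: (leP 1 (x - y)) => d1.
  exists `[0, 1[%classic; split => //; try by move=> r /= hr _; rewrite in_itv /=.
  have -> : Num.max 0 (1 : R) = 1 by apply/max_idPr; rewrite ler01.
  by apply: le_trans (leb_itv_le _ _ _ _ _) _; rewrite ?ler01 // subr0.
case: (leP (x - y) 0) => d0.
  exists set0; split => //.
    move=> r _ /key; rewrite ltNge => /negP; apply; apply: le_floor; lra.
  by rewrite measure0.
set d := x - y.
try have -> : Num.min 1 d = d by apply/min_idPr/ltW.
try have -> : Num.max 0 d = d by apply/max_idPr/ltW.
set m := Num.floor x.
have /andP[mx xm] := floor_itv x; rewrite -/m in mx xm.
rewrite intrD in xm.
set t := x - m%:~R.
have F1 : forall r, 0 <= r -> r <= t -> Num.floor (x - r) = m.
  move=> r r0 rt; apply: floor_def; rewrite intrD; apply/andP; split; rewrite /t in rt; lra.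
have F2 : forall r, r < 1 -> t < r -> Num.floor (x - r) = m - 1.
  move=> r r1 rt; apply: floor_def; rewrite intrD intrN subrK; apply/andP; split; rewrite /t in rt; lra.
have Y : y = x - d by rewrite /d; lra.
have mem : forall r, 0 <= r < 1 -> fr r b < fr r a ->
    (r <= t /\ t - d < r) \/ (t < r /\ t + 1 - d < r).
  move=> r /andP[r0 r1] /key; case: (leP r t) => rt.
    rewrite (F1 _ r0 rt) floor_lt_int => H; left; split => //; rewrite /t; lra.
  rewrite (F2 _ r1 rt) floor_lt_int intrD intrN => H; right; split => //; rewrite /t; lra.
case: (leP d t) => dt.
  exists `]t - d, t]%classic; split => //.
    move=> r hr /(mem _ hr) [[h1 h2]|[h1 h2]]; rewrite /= in_itv /=.
      by rewrite h1 h2.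
    by move: hr => /andP[_ r1]; exfalso; lra.
  by apply: le_trans (leb_itv_le _ _ _ _ _) _; [lra | rewrite lee_fin; lra].
exists (`[0, t] `|` `]t + 1 - d, 1[)%classic; split => //.
  by apply: measurableU.
  move=> r hr /(mem _ hr) [[h1 h2]|[h1 h2]].
    by left; rewrite /= in_itv /=; move: hr => /andP[-> _]; rewrite h1.
  by right; rewrite /= in_itv /=; move: hr => /andP[_ ->]; rewrite h2.
apply: le_trans (measureU2 _ _ _) _ => //.
have ht0 : 0 <= t by rewrite /t; lra.
apply: le_trans (leeD (leb_itv_le _ _ _ _ ht0) (leb_itv_le _ _ _ _ _)) _.
  lra.
rewrite -EFinD lee_fin; lra.
Qed.


Section PC.
Local Close Scope classical_set_scope.
Local Open Scope nat_scope.
Lemma perm_count n (i : 'I_n) (M : {set 'I_n}) : i \notin M ->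
  (#|M|.+1 * #|[set p : {perm 'I_n} | [forall j in M, p j < p i]]| <= n`!)%N.
Proof.
move=> iM.
set U := i |: M.
have cU : #|U| = #|M|.+1 by rewrite cardsU1 iM.
pose C (x : 'I_n) := [set p : {perm 'I_n} | [forall j in U, (j != x) ==> (p j < p x)]].
have Ci : [set p : {perm 'I_n} | [forall j in M, p j < p i]] = C i.
  apply/setP => p; rewrite !inE; apply/forallP/forallP => H j.
    apply/implyP; rewrite !inE => /orP[/eqP ji|jM]; first by rewrite ji eqxx.
    by apply/implyP => _; exact: (implyP (H j) jM).
  apply/implyP => jM; have := implyP (H j); rewrite !inE jM orbT => /(_ isT) /implyP; apply.
  by apply: contraNneq iM => <-.
have le1 : forall x, x \in U -> (#|C i| <= #|C x|)%N.
  move=> x xU.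
  rewrite -(card_imset (C i) (mulgI (tperm i x))).
  apply: subset_leq_card; apply/fintype.subsetP => _ /imsetP[p pC ->].
  rewrite inE; apply/forallP => j; apply/implyP => jU; apply/implyP => jx.
  rewrite !permM tpermR.
  move: pC; rewrite inE => /forallP H.
  have : (tperm i x j \in U) && (tperm i x j != i).
    case: tpermP => [ji|jx'|ji jx2].
    - by move: jx; rewrite ji eq_sym xU => ->.
    - by move: jx; rewrite jx' eqxx.
    - by rewrite jU; apply/eqP.
  by case/andP => tU ti; exact: (implyP (implyP (H _) tU) ti).
have sum1 : (\sum_(x in U) #|C x| <= n`!)%N.
  rewrite -card_Sn.
  have -> : (\sum_(x in U) #|C x| = \sum_(x in U) \sum_(p : {perm 'I_n}) (p \in C x))%N.
    by apply: eq_bigr => x _; rewrite -sum1_card big_mkcond.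
  rewrite exchange_big /= -sum1_card.
  apply: leq_sum => p _.
  rewrite -big_mkcondr /= sum1_card.
  apply/card_le1_eqP => x y /andP[xU px] /andP[yU py].
  apply/eqP; apply: contraT => xy.
  move: px py; rewrite !inE => /forallP Hx /forallP Hy.
  have yx : x != y by apply: contra xy => /eqP ->.
  have h1 := implyP (implyP (Hx y) yU) xy.
  have h2 := implyP (implyP (Hy x) xU) yx.
  by move: (ltn_trans h1 h2); rewrite ltnn.
have : (\sum_(x in U) #|C i| <= n`!)%N.
  apply: leq_trans sum1; apply: leq_sum => x xU; exact: le1.
by rewrite sum_nat_const cU Ci.
Qed.
End PC.



Lemma split_big (V : Type) (idx : V) (op : Monoid.com_law idx) n (P : pred 'I_n) K
  (F : 'I_n -> V) (hK : (K < n)%N) :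
  \big[op/idx]_(j : 'I_n | (j < K.+1)%N && P j) F j =
  if P (Ordinal hK) then op (F (Ordinal hK)) (\big[op/idx]_(j : 'I_n | (j < K)%N && P j) F j)
  else \big[op/idx]_(j : 'I_n | (j < K)%N && P j) F j.
Proof.
set o := Ordinal hK.
have E : forall j : 'I_n, (j < K.+1)%N = (j < K)%N || (j == o).
  move=> j; rewrite ltnS leq_eqVlt orbC; congr (_ || _).
case: ifPn => Po.
  rewrite (bigD1 o) /=; last by rewrite ltnS leqnn Po.
  congr (op _ _); apply: eq_bigl => j; rewrite E.
  case: (eqVneq j o) => [->|jo]; first by rewrite andbF /= ltnn.
  by rewrite orbF andbT.
apply: eq_bigl => j; rewrite E.
case: (eqVneq j o) => [->|jo]; last by rewrite orbF.
by rewrite (negPf Po) !andbF.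
Qed.

Lemma recip_step (R : realType) (a e : R) : 1 <= e -> e <= a ->
  1 / (e + 1) - 1 / (a + 1) <= 1 / e - 1 / a.
Proof.
move=> e1 ea.
have f : forall x : R, 0 < x -> 1 / x - 1 / (x + 1) = 1 / (x * (x + 1)).
  move=> x x0; field; apply/andP; split; rewrite gt_eqF //; lra.
suff : 1 / a - 1 / (a + 1) <= 1 / e - 1 / (e + 1) by lra.
rewrite !f; try lra.
rewrite !div1r lef_pV2 ?posrE; try nra.
Qed.

Lemma wL (R : realType) n (P : pred 'I_n) K : (K <= n)%N ->
  (\sum_(j : 'I_n | (j < K)%N && P j) 1 <= K)%N /\
  1 / (K.+1 - \sum_(j : 'I_n | (j < K)%N && P j) 1)%N%:R
   <= 1 / K.+1%:R + \sum_(j : 'I_n | (j < K)%N && P j) (1 / (j.+1 * j.+2)%:R : R).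
Proof.
elim: K => [_|K IH hK].
  rewrite !big_pred0 // subn0 addr0; split => //.
have [dK IHr] := IH (ltnW hK).
rewrite !(split_big _ _ _ _ _ _ _ hK) /=.
set d := (\sum_(j : 'I_n | (j < K)%N && P j) 1)%N in dK IHr *.
set S := \sum_(j : 'I_n | (j < K)%N && P j) (1 / (j.+1 * j.+2)%:R : R) in IHr *.
case: ifPn => _.
  split; first by rewrite add1n ltnS.
  rewrite add1n subSS.
  have -> : 1 / (K.+2)%:R + (1 / (K.+1 * K.+2)%:R + S) = 1 / K.+1%:R + S.
    rewrite natrM; field.
    by have k0 := ler0n R K; apply/andP; split; rewrite gt_eqF //; lra.
  exact: IHr.
split; first by apply: leqW.
have hd : (d <= K.+1)%N by apply: leqW.
have e1 : (1 : R) <= (K.+1 - d)%:R by rewrite ler1n subn_gt0 ltnS.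
have ea : ((K.+1 - d)%:R : R) <= K.+1%:R by rewrite ler_nat leq_subr.
have := @recip_step R _ _ e1 ea.
have -> : ((K.+2 - d)%:R : R) = (K.+1 - d)%:R + 1 by rewrite subSn // -addn1 natrD.
have -> : (K.+2%:R : R) = K.+1%:R + 1 by rewrite -addn1 natrD.
move: IHr; set A := 1 / ((K.+1 - d)%:R + 1); set B := 1 / (K.+1%:R + 1); set C := 1 / (K.+1 - d)%:R; set D := 1 / K.+1%:R; lra.
Qed.


Lemma lowv_facts (R : realType) n (S : 'I_n -> set R) (v : 'I_n -> ('I_n -> R) -> R)
  (s : 'I_n -> R) (hs : forall i, S i (s i))
  (hv : forall j (t : 'I_n -> R), (forall i, S i (t i)) -> 0 < v j t) (i j : 'I_n) :
  0 <= lowv S v s i j /\ lowv S v s i j <= v j s.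
Proof.
have mem : forall o, S i o -> forall k, S k (upd s i o k).
  by move=> o so k; rewrite /upd; case: eqP => [->|]. 
have ne : [set v j (upd s i o) | o in S i] !=set0.
  by exists (v j (upd s i (s i))); exists (s i).
split.
  apply: lb_le_inf => //.
  move=> _ [ o Hso <-]; apply: ltW; apply: hv; exact: mem Hso.
have hlb : has_lbound [set v j (upd s i o) | o in S i].
  exists 0; move=> _ [ o Hso <-]; apply: ltW; apply: hv; exact: mem Hso.
have -> : v j s = v j (upd s i (s i)).
  by congr (v j _); apply/funext => k; rewrite /upd; case: eqP => [->|].
by apply: ge_inf => //; exists (s i).
Qed.

Lemma log2dag_one (R : realType) (a b : R) : 0 < a -> 0 <= b -> 2 * b <= a ->
  log2dag_div a b = 1.
Proof.
move=> a0 b0 ba; rewrite /log2dag_div; case: ifPn => // bn0.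
have bp : 0 < b by rewrite lt_neqAle eq_sym bn0.
have h : 1 <= log2 (a / b).
  rewrite /log2 ler_pdivlMr; last by apply: ln_gt0; rewrite ltr1n.
  rewrite mul1r ler_ln ?posrE ?divr_gt0 //.
  by rewrite ler_pdivlMr // mulrC.
have -> : Num.min 1 (log2 (a / b)) = 1 by apply/min_idPl.
by apply/max_idPr; rewrite ler01.
Qed.

Lemma int_indic_le (R : realType) (D : set R) (c : R) (I : set R) :
  measurable D -> 0 <= c -> measurable I ->
  (\int[lebesgue_measure]_(x in D) (c * \1_I x)%:E <= c%:E * lebesgue_measure I)%E.
Proof.
move=> mD c0 mI.
under eq_integral do rewrite EFinM.
rewrite ge0_integralZl_EFin //; last by apply/measurable_realfun.measurable_EFinP; exact: measurable_realfun.measurable_indic.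
rewrite integral_indic //.
apply: lee_wpmul2l; first by rewrite lee_fin.
apply: le_measure => //; rewrite ?inE //; exact: measurableI.
Qed.

Lemma count_lt n K : (K <= n)%N -> (\sum_(j : 'I_n | (j < K)%N) 1 = K)%N.
Proof.
elim: K => [_|K IH hK]; first by rewrite big_pred0.
have := @split_big nat 0%N addn n predT K (fun _ => 1%N) hK.
have E : forall m, (\sum_(j : 'I_n | (j < m)%N && predT j) 1 = \sum_(j : 'I_n | (j < m)%N) 1)%N.
  by move=> m; apply: eq_bigl => j; rewrite andbT.
rewrite !E => ->.
by rewrite IH ?add1n // ltnW.
Qed.


Lemma intD_EFin (R : realType) (D : set R) (f g : R -> R) : measurable D ->
  (forall x, D x -> 0 <= f x) -> (forall x, D x -> 0 <= g x) ->
  measurable_fun D f -> measurable_fun D g ->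
  (\int[lebesgue_measure]_(x in D) (f x + g x)%:E =
   \int[lebesgue_measure]_(x in D) (f x)%:E + \int[lebesgue_measure]_(x in D) (g x)%:E)%E.
Proof.
move=> mD f0 g0 mf mg.
under eq_integral do rewrite EFinD.
apply: ge0_integralD => //; try (by move=> x Dx; rewrite lee_fin ?f0 ?g0);
  exact/measurable_realfun.measurable_EFinP.
Qed.

Lemma int_sum_EFin (R : realType) (D : set R) n (F : 'I_n -> R -> R) : measurable D ->
  (forall j x, D x -> 0 <= F j x) -> (forall j, measurable_fun D (F j)) ->
  (\int[lebesgue_measure]_(x in D) (\sum_(j : 'I_n) F j x)%:E =
   \sum_(j : 'I_n) \int[lebesgue_measure]_(x in D) (F j x)%:E)%E.
Proof.
move=> mD F0 mF.
under eq_integral do rewrite -sumEFin.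
apply: ge0_integral_sum => //; try (by move=> j x Dx; rewrite lee_fin F0).
move=> j; apply/(measurable_realfun.measurable_EFinP D (F j)); exact: mF.
Qed.

Theorem mainTheorem10 (R : realType) (n : nat) (n0 : (0 < n)%N)
  (S : 'I_n -> set R) (v : 'I_n -> ('I_n -> R) -> R) (s : 'I_n -> R)
  (hs : forall i, S i (s i))
  (hv : forall j (t : 'I_n -> R), (forall i, S i (t i)) -> 0 < v j t)
  (hsorted : forall i j : 'I_n, (i <= j)%N -> v j s <= v i s) :
  let i1 := Ordinal n0 in
  let k := kidx v s i1 in
  forall i : 'I_n,
  (Ec S v s i <=
   (1 / (i.+1 * i.+2)%:R
    + log2dag_div (2 * v i s) (lowv S v s i i1) / k.+1%:R
    + \sum_(j : 'I_n | (j < k)%N && (j != i))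
        log2dag_div (v i s) (lowv S v s i j) / (j.+1 * j.+2)%:R)%:E)%E.
Proof.
move=> i1 k i.
have kn : (k <= n)%N by rewrite /k /kidx; apply/bigmax_leqP => j _; exact: ltn_ord.
have a0 : 0 < v i s by apply: hv.
have L0 : forall j, 0 <= lowv S v s i j by move=> j; case: (@lowv_facts R n S v s hs hv i j).
set D := `[0%R, 1%R[%classic : set R.
have mD : measurable D by apply: measurable_itv.
have lD : (lebesgue_measure D = 1)%E.
  by rewrite /D lebesgue_measure_itv /= lte_fin ltr01 oppr0 adde0.
have [I0 [mI0 hI0 lI0]] : exists I0 : set R, [/\ measurable I0,
   (forall r, 0 <= r < 1 -> I0 r \/ (forall p, c_alloc S v s i r p = 0)) &
   (lebesgue_measure I0 <= (log2dag_div (2 * v i s) (lowv S v s i i1))%:E)%E].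
  case: (eqVneq i i1) => [ii1|ii1].
    exists D; split => //.
      by move=> r hr; left; rewrite /D /= in_itv /=.
    rewrite log2dag_one ?mulr_gt0 //; first by rewrite lD.
    rewrite ler_pM2l //; rewrite -ii1; by case: (@lowv_facts R n S v s hs hv i i).
  have [I [mI hI lI]] := @fr_meas R _ _ (mulr_gt0 (ltr0n R 2) a0) (L0 i1).
  exists I; split => // r hr.
  case Hr: (fr r (lowv S v s i i1) < fr r (2 * v i s)); first by left; exact: hI.
  right => p; rewrite /c_alloc; case: ifP => // /forallP /(_ i1).
  rewrite eq_sym ii1 /= /gt_pi.
  move: Hr; rewrite fr2 // => /negbT; rewrite -leNgt => Hr.
  have fa0 := @fr_gt0 R r _ a0.
  have -> : (fr r (lowv S v s i i1) < fr r (v i s)) = false.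
    by apply/negbTE; rewrite -leNgt; apply: le_trans Hr; lra.
  have -> : (fr r (v i s) == fr r (lowv S v s i i1)) = false.
    by apply/negbTE; rewrite neq_lt; apply/orP; left; apply: lt_le_trans Hr; lra.
  by [].
have [I hI] := choice (fun j => @fr_meas R (v i s) (lowv S v s i j) a0 (L0 j)).
have mI : forall j, measurable (I j) by move=> j; case: (hI j).
set c0 := 1 / k.+1%:R : R.
have c00 : 0 <= c0 by rewrite divr_ge0.
set w := fun j : 'I_n => 1 / (j.+1 * j.+2)%:R : R.
set wc := fun j : 'I_n => if (j < k)%N && (j != i) then w j else 0.
have w0 : forall j, 0 <= w j by move=> j; rewrite /w divr_ge0.
have wc0 : forall j, 0 <= wc j by move=> j; rewrite /wc; case: ifP.
set N := (#|{perm 'I_n}|%:R : R).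
have N0 : 0 < N by rewrite /N card_Sn ltr0n fact_gt0.
have c01 : forall r p, c_alloc S v s i r p = 0 \/ c_alloc S v s i r p = 1.
  by move=> r p; rewrite /c_alloc; case: ifP; auto.
have g0 : forall r, 0 <= (\sum_(p : {perm 'I_n}) c_alloc S v s i r p) / N.
  move=> r; rewrite divr_ge0 ?(ltW N0) //; apply: sumr_ge0 => p _.
  by case: (c01 r p) => ->.
set h := fun r => c0 * \1_I0 r + (w i + \sum_(j : 'I_n) wc j * \1_(I j) r).
have pw : forall r, D r -> (\sum_(p : {perm 'I_n}) c_alloc S v s i r p) / N <= h r.
  move=> r Dr.
  have hr : 0 <= r < 1 by move: Dr; rewrite /D /= in_itv.
  have ind0 : forall (A : set R) x, 0 <= (\1_A x : R) by move=> A x; rewrite indicE ler0n.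
  have h0 : 0 <= h r.
    rewrite /h addr_ge0 ?mulr_ge0 ?addr_ge0 ?w0 //.
    by apply: sumr_ge0 => j _; rewrite mulr_ge0.
  case: (hI0 r hr) => [I0r | cz]; last first.
    by rewrite (eq_bigr (fun _ => 0)) ?big1 ?mul0r // => p _; rewrite cz.
  rewrite /h indicE mem_set // mulr1.
  pose A j := fr r (lowv S v s i j) < fr r (v i s).
  pose P j := (j == i) || A j.
  pose M := [set j : 'I_n | (j < k)%N && ~~ P j]%SET.
  have iM : i \notin M by rewrite inE /P eqxx /= andbF.
  pose C := [set p : {perm 'I_n} | [forall j in M, (p j < p i)%N]]%SET.
  have cnt := @perm_count n i M iM; rewrite -/C in cnt.
  have sumc : \sum_(p : {perm 'I_n}) c_alloc S v s i r p <= #|C|%:R.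
    rewrite -sumr_const [X in _ <= X]big_mkcond /=; apply: ler_sum => p _.
    rewrite /c_alloc; case: ifPn => [/forallP H|_]; last by case: ifP.
    have -> : p \in C.
      rewrite inE; apply/forallP => j; apply/implyP; rewrite inE => /andP[_ Pj].
      move: (implyP (H j)); rewrite /gt_pi.
      have ji : j != i by move: Pj; rewrite /P negb_or => /andP[].
      have nA : ~~ A j by move: Pj; rewrite /P negb_or => /andP[].
      by move=> /(_ ji) /orP[hA|/andP[_ ->]] //; move: nA; rewrite /A hA.
    by [].
  have [dk Hw] := @wL R n P k kn.
  set d := (\sum_(j : 'I_n | (j < k)%N && P j) 1)%N in dk Hw.
  have cM : #|M| = (k - d)%N.
    suff : (d + #|M|)%N = k by move=> <-; rewrite addKn.
    rewrite -[in RHS](@count_lt n k kn) (bigID P) /= -sum1_card.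
    by congr (_ + _)%N; apply: eq_bigl => j; rewrite inE.
  have step1 : (\sum_(p : {perm 'I_n}) c_alloc S v s i r p) / N <= 1 / (k.+1 - d)%:R.
    have Ni : 0 <= N^-1 by rewrite invr_ge0 ltW.
    apply: le_trans (ler_wpM2r Ni sumc) _.
    rewrite ler_pdivrMr // div1r mulrC ler_pdivlMr ?ltr0n ?subn_gt0 ?ltnS //.
    by rewrite -natrM ler_nat /N card_Sn subSn // -cM mulnC.
  have step2 : \sum_(j : 'I_n | (j < k)%N && P j) (1 / (j.+1 * j.+2)%:R : R)
      <= w i + \sum_(j : 'I_n) wc j * \1_(I j) r.
    rewrite big_mkcond /= (bigD1 i) //= [X in _ <= _ + X](bigD1 i) //=.
    have -> : wc i = 0 by rewrite /wc eqxx andbF.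
    rewrite mul0r add0r lerD //; first by case: ifP => _; rewrite ?w0.
    apply: ler_sum => j ji.
    case: ifPn => [/andP[jk Pj]|_]; last by rewrite mulr_ge0.
    have Aj : A j by move: Pj; rewrite /P (negPf ji).
    have Ij : I j r by case: (hI j) => _ H _; exact: H.
    by rewrite /wc jk ji indicE mem_set // mulr1.
  apply: le_trans step1 _; apply: le_trans Hw _.
  by rewrite lerD2l.
rewrite /Ec -/D.
apply: le_trans (@int_mono R D _ (fun r => (h r)%:E) _ _) _.
- by move=> r _; rewrite lee_fin g0.
- by move=> r Dr; rewrite lee_fin pw.
have ind0 : forall (A : set R) x, 0 <= (\1_A x : R) by move=> A x; rewrite indicE ler0n.
have mf1 : measurable_fun D (fun x => c0 * \1_I0 x).
  apply: (@measurable_realfun.measurable_funM _ _ _ _ (cst c0)).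
    exact: measurable_cst.
  exact: measurable_realfun.measurable_indic.
have mfj : forall j, measurable_fun D (fun x => wc j * \1_(I j) x).
  move=> j; apply: (@measurable_realfun.measurable_funM _ _ _ _ (cst (wc j))).
    exact: measurable_cst.
  exact: measurable_realfun.measurable_indic.
have mfs : measurable_fun D (fun x => \sum_(j : 'I_n) wc j * \1_(I j) x).
  by apply: measurable_sum => j; exact: mfj.
have mf23 : measurable_fun D (fun x => w i + \sum_(j : 'I_n) wc j * \1_(I j) x).
  by apply: (@measurable_realfun.measurable_funD _ _ _ _ (cst (w i))); [exact: measurable_cst | exact: mfs].
rewrite /h intD_EFin //; first last.
- by move=> x _; rewrite addr_ge0 // sumr_ge0 // => j _; rewrite mulr_ge0.
- by move=> x _; rewrite mulr_ge0.
rewrite [X in (_ + X <= _)%E]intD_EFin //; try exact: measurable_cst.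
rewrite int_sum_EFin //; [|by move=> j x Dx; rewrite mulr_ge0].
set ld0 := log2dag_div (2 * v i s) (lowv S v s i i1).
set ld := fun j => log2dag_div (v i s) (lowv S v s i j).
have B1 : (\int[lebesgue_measure]_(x in D) (c0 * \1_I0 x)%:E <= (c0 * ld0)%:E)%E.
  apply: le_trans (@int_indic_le R D c0 I0 mD c00 mI0) _; rewrite (EFinM c0 ld0).
  by apply: lee_wpmul2l => //; rewrite lee_fin.
have B2 : (\int[lebesgue_measure]_(x in D) (w i)%:E = (w i)%:E)%E.
  rewrite integral_cst //; transitivity ((w i)%:E * 1)%E; [congr (_ * _)%E; exact: lD | by rewrite mule1].
have B3 : (\sum_(j : 'I_n) \int[lebesgue_measure]_(x in D) (wc j * \1_(I j) x)%:E
      <= (\sum_(j : 'I_n) wc j * ld j)%:E)%E.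
  rewrite -sumEFin; apply: lee_sum => j _.
  apply: le_trans (@int_indic_le R D (wc j) (I j) mD (wc0 j) (mI j)) _; rewrite (EFinM (wc j)).
  by apply: lee_wpmul2l; [rewrite lee_fin | case: (hI j)].
rewrite B2.
apply: le_trans (leeD B1 (leeD (lexx _) B3)) _.
rewrite -!EFinD lee_fin.
have -> : \sum_(j : 'I_n | (j < k)%N && (j != i))
       log2dag_div (v i s) (lowv S v s i j) / (j.+1 * j.+2)%:R = \sum_(j : 'I_n) wc j * ld j.
  rewrite big_mkcond; apply: eq_bigr => j _; rewrite /wc /ld /w.
  by case: ifP => _; [rewrite div1r mulrC | rewrite mul0r].
have -> : c0 * ld0 = ld0 / k.+1%:R by rewrite /c0 div1r mulrC.
by rewrite /w addrA [ld0 / _ + _]addrC.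
by move=> x Dx; rewrite sumr_ge0 // => j _; rewrite mulr_ge0.
Qed.
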